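(* Fix $r\ge2$ and $c>\ln4$, and set $c'=c/2-\ln2$ and $\tilde\varepsilon_r=(cm\,2^{r-m})^{1/2^r}$. For $\mathrm{RM}(r,m)$ used on a binary symmetric channel with crossover probability $(1-\tilde\varepsilon_r)/2$, for all sufficiently large $m$ the algorithm $\Phi_r^m$ satisfies, for every end node of its recursion, $$p<\max\left\{e^{-c'm},\,2^{-(m-r)/2+m^{1/2}}\right\},$$ where $p$ is the conditional error probability at that end node defined below; in particular all these probabilities tend to $0$ as $m\to\infty$.
   Context: Assume the all-ones codeword (in $\pm1$ form) is sent; received $y_1,\dots,y_n$ ($n=2^m$) are i.i.d. with $\Pr\{y_i=-1\}=(1-\tilde\varepsilon_r)/2$. For binary strings $\xi$ define $\mathbf y(\varnothing)=\mathbf y$ and, splitting $\mathbf y(\underline\xi)$ into halves $(\mathbf y',\mathbf y'')$, $\mathbf y(\underline\xi,0)=\mathbf y'\mathbf y''$ (componentwise), $\mathbf y(\underline\xi,1)=(\mathbf y'+\mathbf y'')/2$. Algorithm $\Phi_r^m$: on $(\mathbf y',\mathbf y'')$ with $1<r<m$ it decodes $\mathbf y'\mathbf y''$ recursively in $\mathrm{RM}(r-1,m-1)$ obtaining $\hat{\mathbf v}$, then $(\mathbf y'+\mathbf y''\hat{\mathbf v})/2$ recursively in $\mathrm{RM}(r,m-1)$; at $r=1$ (biorthogonal code) or $r=m$ (full space) it performs MD decoding (output the codeword maximizing the inner product with the input). In the recursion tree, from node $(m,r)$ a step $0$ leads to $(m'-1,r'-1)$ and a step $1$ to $(m'-1,r')$;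 the walk stops at a biorthogonal node $(g+1,1)$ or at a full-space node $(h,h)$. With all previous decisions correct, the input at the end node reached by the step string $\underline\xi$ is $\mathbf y(\underline\xi)$. For a biorthogonal node, $p$ is the probability that MD decoding of $\mathbf y(\underline\xi)$ in $\mathrm{RM}(1,g+1)$ returns a codeword other than the all-ones word; for a full-space node, for each coordinate $\sigma$, $p$ is the probability that the $\sigma$-th entry of $\mathbf y(\underline\xi)$ is negative (zero counted with probability $1/2$). *)

(* Defs.v *)
From Stdlib Require Import Bool Reals List Arith.
Import ListNotations.
Open Scope R_scope.

(** Channel outputs: a bit [true] means the received symbol is -1, [false] means +1. *)
Definition sgn (b : bool) : R := if b then -1 else 1.

Fixpoint all_lists (n : nat) : list (list bool) :=
  match n with
  | O => [@nil bool]
  | S k => map (cons false) (all_lists k) ++ map (cons true) (all_lists k)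
  end.

Definition sumR (l : list R) : R := fold_right Rplus 0 l.

Definition weight (eps : R) (l : list bool) : R :=
  fold_right Rmult 1 (map (fun b : bool => if b then (1 - eps) / 2 else (1 + eps) / 2) l).

Definition Ex (eps : R) (n : nat) (f : list bool -> R) : R :=
  sumR (map (fun l => weight eps l * f l) (all_lists n)).

Definition indic (b : bool) : R := if b then 1 else 0.

Definition halves (v : list R) : list R * list R :=
  (firstn (length v / 2) v, skipn (length v / 2) v).

(** One step of the y(xi) construction: step [false] = 0, step [true] = 1. *)
Definition ystep (b : bool) (v : list R) : list R :=
  let '(v1, v2) := halves v in
  if b then map (fun p => (fst p + snd p) / 2) (combine v1 v2)
  else map (fun p => fst p * snd p) (combine v1 v2).

Definition yxi (xi : list bool) (y : list R) : list R :=
  fold_left (fun v b => ystep b v) xi y.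

(** Recursion tree walk from node (m, r): step 0 -> (m-1, r-1), step 1 -> (m-1, r).
    [endpath m r xi]: every node strictly before the end is interior (1 < r' < m')
    and the walk stops at a biorthogonal node (r' = 1) or a full-space node (r' = m'). *)
Fixpoint endpath (m r : nat) (xi : list bool) : Prop :=
  match xi with
  | [] => r = 1%nat \/ r = m
  | b :: xi' => (1 < r < m)%nat /\ endpath (m - 1) (if b then r else r - 1) xi'
  end.

Fixpoint final_node (m r : nat) (xi : list bool) : nat * nat :=
  match xi with
  | [] => (m, r)
  | b :: xi' => final_node (m - 1) (if b then r else r - 1) xi'
  end.

(** RM(1,k) in +-1 form: word of the affine function a0 + sum_i a_i x_i,
    coordinate j <-> binary expansion of j. *)
Fixpoint lin (a : list bool) (j : nat) : bool :=
  match a with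
  | [] => false
  | ai :: a' => xorb (ai && Nat.odd j) (lin a' (Nat.div2 j))
  end.

Definition rm1_word (k : nat) (a0 : bool) (a : list bool) : list R :=
  map (fun j => sgn (xorb a0 (lin a j))) (seq 0 (2 ^ k)).

Definition rm1_code (k : nat) : list (list R) :=
  flat_map (fun a => [rm1_word k false a; rm1_word k true a]) (all_lists k).

Definition inner (u v : list R) : R := sumR (map (fun p => fst p * snd p) (combine u v)).

Definition all_ones (k : nat) : list R := repeat 1 (2 ^ k).

Definition Rleb (x y : R) : bool := if Rle_dec x y then true else false.
Definition Rltb (x y : R) : bool := if Rlt_dec x y then true else false.
Definition Reqb (x y : R) : bool := if Req_EM_T x y then true else false.
Definition is_all_ones (c : list R) : bool := forallb (fun x => Reqb x 1) c.

(** MD decoding of v in RM(1,k) fails (returns a codeword other than all-ones)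
    for some maximum-inner-product decoder: some codeword c <> 1 has
    <v,c> >= <v,1>. *)
Definition md_error (k : nat) (v : list R) : bool :=
  existsb (fun c => negb (is_all_ones c) && Rleb (inner v (all_ones k)) (inner v c))
          (rm1_code k).

Definition p_biorth (eps : R) (m : nat) (xi : list bool) : R :=
  Ex eps (2 ^ m) (fun l =>
    indic (md_error (m - length xi) (yxi xi (map sgn l)))).

(** Error probability of coordinate sigma at a full-space end node reached by xi
    (negative entry, zero counted with probability 1/2). *)
Definition p_full (eps : R) (m : nat) (xi : list bool) (sigma : nat) : R :=
  Ex eps (2 ^ m) (fun l =>
    let v := nth sigma (yxi xi (map sgn l)) 0 in
    indic (Rltb v 0) + / 2 * indic (Reqb v 0)).

Definition eps_tilde (c : R) (r m : nat) : R :=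
  Rpower (c * INR m * 2 ^ r / 2 ^ m) (/ 2 ^ r).

Definition err_bound (c : R) (r m : nat) : R :=
  Rmax (exp (- (c / 2 - ln 2) * INR m))
       (Rpower 2 (- (INR m - INR r) / 2 + sqrt (INR m))).

(* Main.v *)
Require Import Defs.
From Stdlib Require Import Reals List Arith Lra Lia Bool Classical.
From Coquelicot Require Import Coquelicot.
Import ListNotations.
Open Scope R_scope.

Lemma hoeff_aux mu : -1 <= mu <= 1 -> forall t,
  ln ((1 + mu) / 2 * exp (- t) + (1 - mu) / 2 * exp t) <= - t * mu + t ^ 2 / 2.
Proof.
  intros Hmu.
  set (p := (1 + mu) / 2). set (q := (1 - mu) / 2).
  assert (Hp : 0 <= p) by (unfold p; lra). assert (Hq : 0 <= q) by (unfold q; lra).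
  set (u := fun t => p * exp (- t) + q * exp t).
  set (w := fun t => q * exp t - p * exp (- t)).
  assert (Hu : forall t, 0 < u t).
  { intros t; unfold u. pose proof (exp_pos t); pose proof (exp_pos (- t)).
    assert (p + q = 1) by (unfold p, q; field).
    destruct (Rle_lt_dec p 0); nra. }
  set (g := fun t => - mu * t + t ^ 2 / 2 - ln (u t)).
  set (g1 := fun t => - mu + t - w t / u t).
  set (g2 := fun t => (w t / u t) ^ 2).
  assert (Dg : forall t, derivable_pt_lim g t (g1 t)).
  { intros t. apply is_derive_Reals. unfold g, g1, u, w.
    specialize (Hu t); unfold u in Hu.
    auto_derive.
    - lra.
    - field. lra. }
  assert (Dg1 : forall t, derivable_pt_lim g1 t (g2 t)).
  { intros t. apply is_derive_Reals. unfold g1, g2, u, w.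
    specialize (Hu t); unfold u in Hu.
    auto_derive.
    - lra.
    - field. lra. }
  assert (g0 : g 0 = 0).
  { unfold g, u. rewrite Ropp_0, exp_0. replace (p * 1 + q * 1) with 1 by (unfold p, q; field).
    rewrite ln_1. replace (0 ^ 2) with 0 by (simpl; lra). lra. }
  assert (g10 : g1 0 = 0).
  { unfold g1, w, u. rewrite Ropp_0, exp_0. unfold p, q. field; lra. }
  assert (Hg2 : forall t, 0 <= g2 t) by (intros; unfold g2; rewrite <- Rsqr_pow2; apply Rle_0_sqr).
  assert (Hg1p : forall c, 0 <= c -> 0 <= g1 c).
  { intros c [Hc|Hc]; [|subst; lra].
    destruct (MVT_cor3 g1 g2 0 c Hc (fun x _ _ => Dg1 x)) as [d [_ [_ E]]].
    rewrite E, g10. specialize (Hg2 d). nra. }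
  assert (Hg1n : forall c, c <= 0 -> g1 c <= 0).
  { intros c [Hc|Hc]; [|subst; lra].
    destruct (MVT_cor3 g1 g2 c 0 Hc (fun x _ _ => Dg1 x)) as [d [_ [_ E]]].
    rewrite g10 in E. specialize (Hg2 d). nra. }
  assert (Hg : forall t, 0 <= g t).
  { intros t. destruct (Rtotal_order t 0) as [Ht|[Ht|Ht]].
    - destruct (MVT_cor3 g g1 t 0 Ht (fun x _ _ => Dg x)) as [d [Hd1 [Hd2 E]]].
      rewrite g0 in E. specialize (Hg1n d Hd2). nra.
    - subst; lra.
    - destruct (MVT_cor3 g g1 0 t Ht (fun x _ _ => Dg x)) as [d [Hd1 [Hd2 E]]].
      rewrite g0 in E. specialize (Hg1p d Hd1). nra. }
  intros t. specialize (Hg t). unfold g, u in Hg. fold p q. lra.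
Qed.

Lemma hoeffding mu t : -1 <= mu <= 1 ->
  (1 + mu) / 2 * exp (- t) + (1 - mu) / 2 * exp t <= exp (- t * mu + t ^ 2 / 2).
Proof.
  intros H. pose proof (hoeff_aux mu H t) as Hl.
  assert (0 < (1 + mu) / 2 * exp (- t) + (1 - mu) / 2 * exp t).
  { pose proof (exp_pos t); pose proof (exp_pos (- t)).
    destruct (Rle_lt_dec (1 + mu) 0); nra. }
  rewrite <- (exp_ln _ H0). destruct Hl as [Hl|Hl]; [left; apply exp_increasing; auto| rewrite Hl; lra].
Qed.

Definition Law := list (R * R).
Fixpoint EL (L : Law) (g : R -> R) : R :=
  match L with [] => 0 | pv :: L' => fst pv * g (snd pv) + EL L' g end.

Lemma EL_ext L f g : (forall x, f x = g x) -> EL L f = EL L g.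
Proof. intros H; induction L as [|[p v] L IH]; simpl; [lra| rewrite H, IH; lra]. Qed.

Lemma EL_plus L f g : EL L (fun x => f x + g x) = EL L f + EL L g.
Proof. induction L as [|[p v] L IH]; simpl; [lra| rewrite IH; ring]. Qed.

Lemma EL_scal L a f : EL L (fun x => a * f x) = a * EL L f.
Proof. induction L as [|[p v] L IH]; simpl; [lra| rewrite IH; ring]. Qed.

Lemma EL_app L1 L2 g : EL (L1 ++ L2) g = EL L1 g + EL L2 g.
Proof. induction L1 as [|[p v] L IH]; simpl; [lra| rewrite IH; ring]. Qed.

Lemma EL_swap L L' (K : R -> R -> R) :
  EL L (fun x => EL L' (fun y => K x y)) = EL L' (fun y => EL L (fun x => K x y)).
Proof.
  induction L as [|[p v] L IH]; simpl.
  - induction L' as [|[q w] L' IH']; simpl; [lra| rewrite <- IH'; ring].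
  - rewrite IH. rewrite <- EL_scal, <- EL_plus. apply EL_ext; intros; simpl; ring.
Qed.

Definition nonnegL (L : Law) := List.Forall (fun pv => 0 <= fst pv) L.

Lemma EL_mono L f g : nonnegL L -> (forall x, f x <= g x) -> EL L f <= EL L g.
Proof.
  intros HL H; induction HL as [|[p v] L Hp HL IH]; simpl in *; [lra|].
  apply Rplus_le_compat; [apply Rmult_le_compat_l; auto | auto].
Qed.

Definition op (b : bool) (x y : R) : R := if b then (x + y) / 2 else x * y.

Definition step (b : bool) (L : Law) : Law :=
  flat_map (fun pv => map (fun qw => (fst pv * fst qw, op b (snd pv) (snd qw))) L) L.

Lemma EL_step_gen b L0 L1 g :
  EL (flat_map (fun pv => map (fun qw => (fst pv * fst qw, op b (snd pv) (snd qw))) L0) L1) g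
  = EL L1 (fun x => EL L0 (fun y => g (op b x y))).
Proof.
  induction L1 as [|[p v] L IH]; simpl; [lra|].
  rewrite EL_app, IH. f_equal.
  clear IH. induction L0 as [|[q w] L0 IH]; simpl; [ring| rewrite IH; ring].
Qed.

Lemma EL_step b L g : EL (step b L) g = EL L (fun x => EL L (fun y => g (op b x y))).
Proof. apply EL_step_gen. Qed.

Fixpoint prodE (L : Law) (n : nat) (G : list R -> R) : R :=
  match n with
  | O => G []
  | S n' => EL L (fun x => prodE L n' (fun v => G (x :: v)))
  end.

Lemma prodE_ext L n G G' :
  (forall v, length v = n -> G v = G' v) -> prodE L n G = prodE L n G'.
Proof.
  revert G G'; induction n as [|n IH]; intros G G' H; simpl.
  - apply H; reflexivity.
  - apply EL_ext; intros x; apply IH; intros v Hv; apply H; simpl; lia.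
Qed.

Lemma prodE_plus L n F G :
  prodE L n (fun v => F v + G v) = prodE L n F + prodE L n G.
Proof.
  revert F G; induction n as [|n IH]; intros F G; simpl; [reflexivity|].
  rewrite <- EL_plus; apply EL_ext; intros x; apply IH.
Qed.

Lemma prodE_scal L n a G : prodE L n (fun v => a * G v) = a * prodE L n G.
Proof.
  revert G; induction n as [|n IH]; intros G; simpl; [reflexivity|].
  rewrite <- EL_scal; apply EL_ext; intros x; apply IH.
Qed.

Definition mass1 (L : Law) := EL L (fun _ => 1) = 1.

Lemma EL_const L a : mass1 L -> EL L (fun _ => a) = a.
Proof. intros H. rewrite (EL_ext L (fun _ => a) (fun _ => a * 1)) by (intros; ring).
  rewrite EL_scal, H; ring. Qed.

Lemma prodE_const L n a : mass1 L -> prodE L n (fun _ => a) = a.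
Proof. intros H; induction n; simpl; [reflexivity|].
  rewrite (EL_ext _ _ (fun _ => a)) by (intros; apply IHn). apply EL_const, H. Qed.

Lemma prodE_mono L n F G : nonnegL L -> (forall v, F v <= G v) -> prodE L n F <= prodE L n G.
Proof.
  revert F G; induction n as [|n IH]; intros F G HL H; simpl; [apply H|].
  apply EL_mono; auto.
Qed.

Lemma prodE_swap L L' n (K : list R -> R -> R) :
  prodE L n (fun v => EL L' (fun y => K v y)) = EL L' (fun y => prodE L n (fun v => K v y)).
Proof.
  revert K; induction n as [|n IH]; intros K; simpl; [reflexivity|].
  rewrite (EL_ext _ _ (fun x => EL L' (fun y => prodE L n (fun v => K (x :: v) y)))).
  - apply EL_swap.
  - intros x; apply (IH (fun v y => K (x :: v) y)).
Qed.

Lemma prodE_app L n1 n2 G :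
  prodE L (n1 + n2) G = prodE L n1 (fun u => prodE L n2 (fun w => G (u ++ w))).
Proof.
  revert G; induction n1 as [|n1 IH]; intros G; simpl; [reflexivity|].
  apply EL_ext; intros x. apply (IH (fun v => G (x :: v))).
Qed.

Definition map2 (b : bool) (u w : list R) : list R :=
  map (fun p => op b (fst p) (snd p)) (combine u w).

Lemma prodE_pair L b n G :
  prodE L n (fun u => prodE L n (fun w => G (map2 b u w))) = prodE (step b L) n G.
Proof.
  revert G; induction n as [|n IH]; intros G; simpl; [reflexivity|].
  rewrite EL_step. apply EL_ext; intros x.
  rewrite (prodE_swap L L n (fun u y => prodE L n (fun w => G (map2 b (x :: u) (y :: w))))).
  apply EL_ext; intros y. apply (IH (fun v => G (op b x y :: v))).
Qed.

Lemma ystep_app b u w : length u = length w ->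
  ystep b (u ++ w) = map2 b u w.
Proof.
  intros H. unfold ystep, halves, map2.
  rewrite length_app, H.
  replace ((length w + length w) / 2)%nat with (length u).
  2:{ rewrite H. replace (length w + length w)%nat with (length w * 2)%nat by lia.
      rewrite Nat.div_mul; lia. }
  rewrite firstn_app, skipn_app, Nat.sub_diag, firstn_all, skipn_all, firstn_O, skipn_O, app_nil_r.
  simpl. destruct b; reflexivity.
Qed.

Lemma prodE_ystep L b n G :
  prodE L (2 * n) (fun v => G (ystep b v)) = prodE (step b L) n G.
Proof.
  replace (2 * n)%nat with (n + n)%nat by lia.
  rewrite prodE_app, <- prodE_pair.
  apply prodE_ext; intros u Hu. apply prodE_ext; intros w Hw.
  rewrite ystep_app by lia. reflexivity.
Qed.

Definition lawf (xi : list bool) (L : Law) : Law := fold_left (fun L b => step b L) xi L.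

Lemma prodE_yxi xi L n G :
  prodE L (2 ^ length xi * n) (fun v => G (yxi xi v)) = prodE (lawf xi L) n G.
Proof.
  revert L; induction xi as [|b xi IH]; intros L; simpl.
  - replace (n + 0)%nat with n by lia. reflexivity.
  - replace ((2 ^ length xi + (2 ^ length xi + 0)) * n)%nat with (2 * (2 ^ length xi * n))%nat by lia.
    rewrite <- IH.
    exact (prodE_ystep L b (2 ^ length xi * n) (fun v => G (yxi xi v))).
Qed.

Definition bitlaw (e : R) : Law := [((1 + e) / 2, 1); ((1 - e) / 2, -1)].

Lemma sumR_app a b : sumR (a ++ b) = sumR a + sumR b.
Proof. induction a; simpl; [lra| rewrite IHa; ring]. Qed.

Lemma sumR_scal (A : list (list bool)) a f :
  sumR (map (fun l => a * f l) A) = a * sumR (map f A).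
Proof. induction A; simpl; [ring| rewrite IHA; ring]. Qed.

Lemma Ex_base e n G : Ex e n (fun l => G (map sgn l)) = prodE (bitlaw e) n G.
Proof.
  revert G; induction n as [|n IH]; intros G.
  - unfold Ex, weight; simpl. ring_simplify. reflexivity.
  - unfold Ex in *; simpl. rewrite map_app, sumR_app, !map_map.
    rewrite <- (IH (fun v => G (1 :: v))), <- (IH (fun v => G (-1 :: v))).
    rewrite <- !sumR_scal.
    unfold weight; simpl.
    f_equal; [|rewrite Rplus_0_r]; f_equal; apply map_ext; intros; ring.
Qed.

Lemma exp_le x y : x <= y -> exp x <= exp y.
Proof. intros [H|H]; [left; apply exp_increasing; auto| subst; lra]. Qed.

Definition prodR (l : list R) : R := fold_right Rmult 1 l.

Fixpoint prodv (hs : list (R -> R)) (v : list R) : R :=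
  match hs, v with
  | h :: hs', x :: v' => h x * prodv hs' v'
  | _, _ => 1
  end.

Lemma prodE_prodv L hs : prodE L (length hs) (prodv hs) = prodR (map (fun h => EL L h) hs).
Proof.
  induction hs as [|h hs IH]; simpl; [reflexivity|].
  rewrite (EL_ext _ _ (fun x => h x * prodE L (length hs) (prodv hs))).
  - rewrite (EL_ext _ _ (fun x => prodR (map (fun h => EL L h) hs) * h x)).
    + rewrite EL_scal; ring.
    + intros; rewrite IH; ring.
  - intros x. apply (prodE_scal L (length hs) (h x) (prodv hs)).
Qed.

Lemma inner_prodv t c v : length v = length c ->
  exp (t * (inner v c - inner v (repeat 1 (length c))))
  = prodv (map (fun ci x => exp (t * x * (ci - 1))) c) v.
Proof.
  revert v; induction c as [|y c IH]; intros v Hv; destruct v as [|x v]; simpl in *; try lia.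
  - unfold inner; simpl. replace (t * (0 - 0)) with 0 by ring. apply exp_0.
  - unfold inner in *; simpl. rewrite <- IH by lia.
    rewrite <- exp_plus. f_equal. ring.
Qed.

Lemma prodR_mult (h1 h2 : nat -> R) l :
  prodR (map (fun j => h1 j * h2 j) l) = prodR (map h1 l) * prodR (map h2 l).
Proof. induction l; simpl; [ring| rewrite IHl; ring]. Qed.

Lemma prodR_nonneg (h : nat -> R) l : (forall j, 0 <= h j) -> 0 <= prodR (map h l).
Proof. intros H; induction l; simpl; [lra| apply Rmult_le_pos; auto]. Qed.

Lemma prodR_le_pow (h : nat -> R) K s n : (forall j, 0 <= h j <= K) ->
  prodR (map h (seq s n)) <= K ^ n.
Proof.
  intros H; revert s; induction n as [|n IH]; intros s; simpl; [lra|].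
  destruct (H s) as [H1 H2].
  apply Rmult_le_compat; auto. apply prodR_nonneg; intros; apply H.
Qed.

Lemma prodR_seq_double (h : nat -> R) s n :
  prodR (map h (seq (2 * s) (2 * n))) = prodR (map (fun j => h (2 * j)%nat * h (2 * j + 1)%nat) (seq s n)).
Proof.
  revert s; induction n as [|n IH]; intros s; [reflexivity|].
  replace (2 * S n)%nat with (S (S (2 * n))) by lia.
  assert (E : seq (2 * s) (S (S (2 * n))) = (2 * s)%nat :: (2 * s + 1)%nat :: seq (2 * S s) (2 * n)).
  { simpl seq. repeat f_equal; lia. }
  rewrite E.
  change (h (2 * s)%nat * (h (2 * s + 1)%nat * prodR (map h (seq (2 * S s) (2 * n))))
    = h (2 * s)%nat * h (2 * s + 1)%nat * prodR (map (fun j => h (2 * j)%nat * h (2 * j + 1)%nat) (seq (S s) n))).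
  rewrite IH. ring.
Qed.

Lemma prodR_seq_double0 (h : nat -> R) n :
  prodR (map h (seq 0 (2 * n))) = prodR (map (fun j => h (2 * j)%nat * h (2 * j + 1)%nat) (seq 0 n)).
Proof. exact (prodR_seq_double h 0 n). Qed.

Lemma lin_even a1 a j : lin (a1 :: a) (2 * j) = lin a j.
Proof.
  unfold lin at 1; fold lin. rewrite Nat.odd_even, Nat.div2_double.
  destruct a1; reflexivity.
Qed.

Lemma lin_odd a1 a j : lin (a1 :: a) (2 * j + 1) = xorb a1 (lin a j).
Proof.
  unfold lin at 1; fold lin. rewrite Nat.odd_odd, Nat.div2_odd'.
  destruct a1; reflexivity.
Qed.

Lemma lin_false a j : existsb (fun x => x) a = false -> lin a j = false.
Proof.
  revert j; induction a as [|a1 a IH]; intros j H; simpl in *; [reflexivity|].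
  apply orb_false_iff in H as [H1 H2]. subst. rewrite IH by auto. reflexivity.
Qed.

Definition fM (M : R) (b : bool) : R := if b then M else 1.

Lemma count_bound M : 0 <= M <= 1 -> forall k a, length a = S k -> forall a0,
  (a0 = true \/ existsb (fun x => x) a = true) ->
  prodR (map (fun j => fM M (xorb a0 (lin a j))) (seq 0 (2 ^ S k))) <= M ^ (2 ^ k).
Proof.
  intros HM; induction k as [|k IH]; intros a Ha a0 Hnt.
  - destruct a as [|a1 [|]]; simpl in Ha; try lia.
    simpl. destruct a0, a1; simpl in *; try lra; destruct Hnt; try discriminate;
    try nra.
  - destruct a as [|a1 a']; simpl in Ha; [lia|].
    replace (2 ^ S (S k))%nat with (2 * 2 ^ S k)%nat by (simpl; lia).
    rewrite prodR_seq_double0.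
    rewrite (map_ext _ (fun j => fM M (xorb a0 (lin a' j)) * fM M (xorb (xorb a0 a1) (lin a' j)))).
    2: { intros j. rewrite lin_even, lin_odd, xorb_assoc. reflexivity. }
    destruct (existsb (fun x => x) a') eqn:Ea.
    + rewrite prodR_mult.
      replace (M ^ 2 ^ S k) with (M ^ 2 ^ k * M ^ 2 ^ k) by (rewrite <- pow_add; f_equal; simpl; lia).
      apply Rmult_le_compat.
      * apply prodR_nonneg; intros; unfold fM; destruct (xorb _ _); lra.
      * apply prodR_nonneg; intros; unfold fM; destruct (xorb _ _); lra.
      * apply IH; auto.
      * apply IH; auto.
    + apply prodR_le_pow. intros j. rewrite lin_false by auto.
      assert (a0 = true \/ a1 = true).
      { destruct Hnt as [H|H]; auto. simpl in H. rewrite Ea in H. destruct a1; auto. }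
      destruct a0, a1; simpl; unfold fM; destruct H; try discriminate; nra.
Qed.

Lemma all_lists_len k l : In l (all_lists k) -> length l = k.
Proof.
  revert l; induction k as [|k IH]; intros l H; simpl in H.
  - destruct H as [<-|[]]; reflexivity.
  - apply in_app_or in H as [H|H]; apply in_map_iff in H as [l' [<- H]]; simpl; f_equal; auto.
Qed.

Lemma all_lists_length k : length (all_lists k) = (2 ^ k)%nat.
Proof. induction k; simpl; [reflexivity| rewrite length_app, !length_map, IHk; lia]. Qed.

Lemma all_lists_head k : exists rest, all_lists k = repeat false k :: rest.
Proof.
  induction k as [|k [rest IH]]; simpl.
  - exists []; reflexivity.
  - rewrite IH. simpl. eexists; reflexivity.
Qed.

Lemma rm1_word_length k a0 a : length (rm1_word k a0 a) = (2 ^ k)%nat.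
Proof. unfold rm1_word; rewrite length_map, length_seq; reflexivity. Qed.

Lemma EL_sgn L t b : mass1 L ->
  EL L (fun x => exp (t * x * (sgn b - 1))) = fM (EL L (fun x => exp (- (2 * t) * x))) b.
Proof.
  intros Hm; destruct b; simpl.
  - apply EL_ext; intros; f_equal; ring.
  - rewrite (EL_ext _ _ (fun _ => 1)). apply EL_const, Hm.
    intros; replace (t * x * (1 - 1)) with 0 by ring; apply exp_0.
Qed.

Lemma word_bound L t k a a0 : mass1 L ->
  0 <= EL L (fun x => exp (- (2 * t) * x)) <= 1 ->
  length a = S k -> (a0 = true \/ existsb (fun x => x) a = true) ->
  prodE L (2 ^ S k) (fun v => exp (t * (inner v (rm1_word (S k) a0 a) - inner v (all_ones (S k)))))
  <= (EL L (fun x => exp (- (2 * t) * x))) ^ (2 ^ k).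
Proof.
  intros Hm HM Ha Hnt.
  set (c := rm1_word (S k) a0 a).
  assert (Hc : length c = (2 ^ S k)%nat) by apply rm1_word_length.
  rewrite (prodE_ext _ _ _ (prodv (map (fun ci x => exp (t * x * (ci - 1))) c))).
  2: { intros v Hv. unfold all_ones. rewrite <- Hc. apply inner_prodv. lia. }
  replace (2 ^ S k)%nat with (length (map (fun ci x => exp (t * x * (ci - 1))) c))
    by (rewrite length_map; lia).
  rewrite prodE_prodv, map_map. unfold c, rm1_word. rewrite map_map.
  rewrite (map_ext _ (fun j => fM (EL L (fun x => exp (- (2 * t) * x))) (xorb a0 (lin a j)))).
  - apply count_bound; auto.
  - intros j. apply EL_sgn, Hm.
Qed.

Lemma trivial_word k a0 a : ~ (a0 = true \/ existsb (fun x => x) a = true) ->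
  is_all_ones (rm1_word k a0 a) = true.
Proof.
  intros H. assert (a0 = false) by (destruct a0; tauto).
  assert (existsb (fun x => x) a = false) by (destruct (existsb _ a); tauto). subst.
  unfold is_all_ones, rm1_word. apply forallb_forall. intros x Hx.
  apply in_map_iff in Hx as [j [<- _]]. rewrite lin_false by auto. simpl.
  unfold Reqb. destruct (Req_EM_T 1 1); congruence.
Qed.

Lemma indic_existsb (f : list R -> bool) l :
  indic (existsb f l) <= sumR (map (fun c => indic (f c)) l).
Proof.
  induction l as [|c l IH]; simpl; [lra|].
  unfold indic in *. destruct (f c), (existsb f l); simpl in *; lra.
Qed.

Lemma prodE_sum L n (F : list R -> list R -> R) l : mass1 L ->
  prodE L n (fun v => sumR (map (fun c => F c v) l)) = sumR (map (fun c => prodE L n (F c)) l).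
Proof.
  intros Hm; induction l as [|c l IH]; simpl.
  - apply prodE_const, Hm.
  - rewrite prodE_plus, IH. reflexivity.
Qed.

Lemma sumR_le (A : Type) (F G : A -> R) l : (forall c, In c l -> F c <= G c) ->
  sumR (map F l) <= sumR (map G l).
Proof.
  induction l as [|c l IH]; intros H; simpl; [lra|].
  apply Rplus_le_compat; [apply H; left; auto| apply IH; intros; apply H; right; auto].
Qed.

Lemma sumR_le_const (A : Type) (F : A -> R) l X : (forall c, In c l -> F c <= X) ->
  sumR (map F l) <= INR (length l) * X.
Proof.
  induction l as [|c l IH]; intros H; [simpl; lra|].
  cbn [length map]. unfold sumR; cbn [fold_right]; fold (sumR (map F l)). rewrite S_INR. assert (F c <= X) by (apply H; left; auto).
  assert (sumR (map F l) <= INR (length l) * X) by (apply IH; intros; apply H; right; auto).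
  lra.
Qed.

Lemma biorth_bound L t k : mass1 L -> nonnegL L -> 0 <= t ->
  0 <= EL L (fun x => exp (- (2 * t) * x)) <= 1 ->
  prodE L (2 ^ S k) (fun v => indic (md_error (S k) v))
  <= (2 * 2 ^ S k - 1) * (EL L (fun x => exp (- (2 * t) * x))) ^ (2 ^ k).
Proof.
  intros Hm Hn Ht HM.
  set (M := EL L (fun x => exp (- (2 * t) * x))).
  set (T := fun c v => if is_all_ones c then 0 else exp (t * (inner v c - inner v (all_ones (S k))))).
  apply Rle_trans with (prodE L (2 ^ S k) (fun v => sumR (map (fun c => T c v) (rm1_code (S k))))).
  { apply prodE_mono; auto. intros v. unfold md_error.
    eapply Rle_trans; [apply indic_existsb|]. apply sumR_le. intros c _.
    unfold T. destruct (is_all_ones c); simpl; unfold indic; [lra|].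
    unfold Rleb. destruct (Rle_dec _ _) as [Hle|]; [|left; apply exp_pos].
    rewrite <- exp_0 at 1. apply exp_le. apply Rmult_le_pos; lra. }
  rewrite prodE_sum by auto.
  destruct (all_lists_head (S k)) as [rest Hrest].
  assert (Hlen : length rest = (2 ^ S k - 1)%nat).
  { pose proof (all_lists_length (S k)) as H. rewrite Hrest in H. simpl in H. simpl. lia. }
  unfold rm1_code. rewrite Hrest. cbn [flat_map app map sumR fold_right].
  assert (E0 : prodE L (2 ^ S k) (T (rm1_word (S k) false (repeat false (S k)))) = 0).
  { unfold T. rewrite trivial_word. apply prodE_const, Hm.
    intros [H|H]; [discriminate|]. revert H. generalize (S k). clear.
    intros n; induction n; simpl; [discriminate| auto]. }
  assert (HT : forall a0 a, In a (all_lists (S k)) ->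
     prodE L (2 ^ S k) (T (rm1_word (S k) a0 a)) <= M ^ (2 ^ k)).
  { intros a0 a Ha. unfold T. destruct (is_all_ones (rm1_word (S k) a0 a)) eqn:E.
    - rewrite prodE_const by auto. apply pow_le; unfold M; lra.
    - apply word_bound; auto. apply all_lists_len; auto.
      destruct (classic (a0 = true \/ existsb (fun x => x) a = true)); auto.
      rewrite trivial_word in E by auto. discriminate. }
  assert (Hsum : sumR (map (fun c => prodE L (2 ^ S k) (T c))
             (flat_map (fun a => [rm1_word (S k) false a; rm1_word (S k) true a]) rest))
           <= INR (length (flat_map (fun a => [rm1_word (S k) false a; rm1_word (S k) true a]) rest)) * M ^ (2 ^ k)).
  { apply sumR_le_const. intros c Hc. apply in_flat_map in Hc as [a [Ha Hc]].
    assert (Ha' : In a (all_lists (S k))) by (rewrite Hrest; right; auto).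
    destruct Hc as [<-|[<-|[]]]; apply HT; auto. }
  assert (Hl : length (flat_map (fun a => [rm1_word (S k) false a; rm1_word (S k) true a]) rest)
     = (2 * length rest)%nat).
  { clear. induction rest; simpl; auto. rewrite IHrest. lia. }
  rewrite Hl, Hlen in Hsum.
  assert (H1 := HT true (repeat false (S k)) ltac:(rewrite Hrest; left; auto)).
  rewrite E0.
  assert (Hp : (1 <= 2 ^ S k)%nat) by (apply Nat.le_succ_l; apply Nat.neq_0_lt_0; apply Nat.pow_nonzero; lia).
  rewrite mult_INR, minus_INR, pow_INR in Hsum by auto. simpl INR in Hsum.
  assert (0 <= M ^ 2 ^ k) by (apply pow_le; unfold M; lra).
  unfold sumR in Hsum. replace (1 + 1) with 2 in Hsum by ring.
  set (P := 2 ^ S k) in *. set (Q := M ^ 2 ^ k) in *. nra.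
Qed.

Lemma EL_zero L : EL L (fun _ => 0) = 0.
Proof. induction L as [|[p v] L IH]; simpl; [lra| rewrite IH; ring]. Qed.

Lemma EL_nonneg L f : nonnegL L -> (forall x, 0 <= f x) -> 0 <= EL L f.
Proof. intros H Hf. rewrite <- (EL_zero L). apply EL_mono; auto. Qed.

Lemma prodE_nth L n s H : mass1 L -> (s < n)%nat ->
  prodE L n (fun v => H (nth s v 0)) = EL L H.
Proof.
  intros Hm; revert n; induction s as [|s IH]; intros n Hn; destruct n as [|n]; try lia; simpl.
  - apply EL_ext; intros x. apply prodE_const, Hm.
  - rewrite (EL_ext _ _ (fun _ => EL L H)). apply EL_const, Hm.
    intros x; apply IH; lia.
Qed.

Lemma full_bound L n s t : mass1 L -> nonnegL L -> (s < n)%nat -> 0 <= t ->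
  prodE L n (fun v => let x := nth s v 0 in indic (Rltb x 0) + / 2 * indic (Reqb x 0))
  <= EL L (fun x => exp (- t * x)).
Proof.
  intros Hm Hn Hs Ht. cbv zeta.
  rewrite (prodE_nth L n s (fun x => indic (Rltb x 0) + / 2 * indic (Reqb x 0))) by auto.
  apply EL_mono; auto. intros x.
  assert (1 + - t * x <= exp (- t * x)) by apply exp_ineq1_le.
  pose proof (exp_pos (- t * x)).
  unfold Rltb, Reqb, indic.
  destruct (Rlt_dec x 0); destruct (Req_EM_T x 0); subst; try nra.
Qed.

Definition boundedL (L : Law) := List.Forall (fun pv => -1 <= snd pv <= 1) L.
Definition SG (L : Law) (mu s2 : R) :=
  forall t, EL L (fun x => exp (- t * x)) <= exp (- t * mu + t ^ 2 * s2 / 2).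
Definition isbit (L : Law) (mu : R) :=
  forall g, EL L g = (1 + mu) / 2 * g 1 + (1 - mu) / 2 * g (-1).

Lemma step_nonneg b L : nonnegL L -> nonnegL (step b L).
Proof.
  intros H. unfold nonnegL, step in *. rewrite Forall_forall in *.
  intros pv Hpv. apply in_flat_map in Hpv as [x [Hx Hpv]]. apply in_map_iff in Hpv as [y [<- Hy]].
  simpl. apply Rmult_le_pos; auto.
Qed.

Lemma step_bounded b L : boundedL L -> boundedL (step b L).
Proof.
  intros H. unfold boundedL, step in *. rewrite Forall_forall in *.
  intros pv Hpv. apply in_flat_map in Hpv as [x [Hx Hpv]]. apply in_map_iff in Hpv as [y [<- Hy]].
  simpl. pose proof (H x Hx); pose proof (H y Hy). unfold op; destruct b.
  - lra.
  - split; nra.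
Qed.

Lemma step_mass b L : mass1 L -> mass1 (step b L).
Proof.
  unfold mass1; intros H. rewrite EL_step.
  rewrite (EL_ext _ _ (fun _ => 1)); auto.
Qed.

Lemma bitlaw_props e : -1 <= e <= 1 ->
  nonnegL (bitlaw e) /\ boundedL (bitlaw e) /\ mass1 (bitlaw e) /\ isbit (bitlaw e) e.
Proof.
  intros He. unfold nonnegL, boundedL, mass1, isbit, bitlaw. repeat split.
  - repeat apply Forall_cons; try apply Forall_nil; simpl; lra.
  - repeat apply Forall_cons; try apply Forall_nil; simpl; lra.
  - simpl; field.
  - intros g; simpl; ring.
Qed.

Lemma isbit_step0 L mu : isbit L mu -> isbit (step false L) (mu * mu).
Proof.
  intros H g. rewrite EL_step. unfold op.
  rewrite (EL_ext _ _ (fun x => (1 + mu) / 2 * g x + (1 - mu) / 2 * g (- x))).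
  2: { intros x. rewrite H. rewrite Rmult_1_r. replace (x * -1) with (- x) by ring. reflexivity. }
  rewrite H. replace (- -1) with 1 by ring. replace (- (1)) with (-1) by ring. field.
Qed.



Lemma isbit_SG L mu : isbit L mu -> -1 <= mu <= 1 -> SG L mu 1.
Proof.
  intros H Hm t. rewrite H. replace (- t * 1) with (- t) by ring.
  replace (- t * -1) with t by ring. replace (t ^ 2 * 1 / 2) with (t ^ 2 / 2) by field.
  apply hoeffding; auto.
Qed.

Lemma SG_mono L mu s2 s2' : s2 <= s2' -> SG L mu s2 -> SG L mu s2'.
Proof.
  intros Hs H t. eapply Rle_trans; [apply H|]. apply exp_le.
  assert (0 <= t ^ 2) by (rewrite <- Rsqr_pow2; apply Rle_0_sqr). nra.
Qed.

Lemma SG_avg L mu s2 : nonnegL L -> SG L mu s2 -> SG (step true L) mu (s2 / 2).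
Proof.
  intros Hn H t. rewrite EL_step. unfold op.
  set (M := EL L (fun y => exp (- (t / 2) * y))).
  rewrite (EL_ext _ _ (fun x => M * exp (- (t / 2) * x))).
  2: { intros x. unfold M. rewrite Rmult_comm, <- EL_scal. apply EL_ext; intros y.
       rewrite <- exp_plus. f_equal. field. }
  rewrite EL_scal. fold M.
  assert (0 <= M) by (apply EL_nonneg; auto; intros; left; apply exp_pos).
  specialize (H (t / 2)). fold M in H.
  replace (- t * mu + t ^ 2 * (s2 / 2) / 2)
    with ((- (t / 2) * mu + (t / 2) ^ 2 * s2 / 2) + (- (t / 2) * mu + (t / 2) ^ 2 * s2 / 2)) by field.
  rewrite exp_plus. apply Rmult_le_compat; auto.
Qed.

Lemma EL_mono_b L f g : nonnegL L -> boundedL L -> (forall x, -1 <= x <= 1 -> f x <= g x) ->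
  EL L f <= EL L g.
Proof.
  intros Hn Hb H; induction L as [|[p v] L IH]; simpl; [lra|].
  inversion Hn; inversion Hb; subst; simpl in *.
  apply Rplus_le_compat; [apply Rmult_le_compat_l; auto| auto].
Qed.

Lemma SG_prod L mu s2 : nonnegL L -> boundedL L -> 0 <= s2 -> SG L mu s2 ->
  SG (step false L) (mu * mu) (s2 * (1 + mu * mu)).
Proof.
  intros Hn Hb Hs H t. rewrite EL_step. unfold op.
  apply Rle_trans with (EL L (fun x => exp (t ^ 2 * s2 / 2) * exp (- (t * mu) * x))).
  - apply EL_mono_b; auto. intros v Hv.
    rewrite (EL_ext _ _ (fun y => exp (- (t * v) * y))) by (intros; f_equal; ring).
    eapply Rle_trans; [apply H|]. rewrite <- exp_plus. apply exp_le.
    assert (0 <= t ^ 2 * s2) by (apply Rmult_le_pos; auto; rewrite <- Rsqr_pow2; apply Rle_0_sqr).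
    assert (v ^ 2 <= 1) by nra. nra.
  - rewrite EL_scal. eapply Rle_trans.
    + apply Rmult_le_compat_l; [left; apply exp_pos| apply H].
    + rewrite <- exp_plus. apply exp_le. nra.
Qed.

Fixpoint nz (xi : list bool) : nat := match xi with [] => O | b :: xi' => ((if b then 0 else 1) + nz xi')%nat end.
Fixpoint no (xi : list bool) : nat := match xi with [] => O | b :: xi' => ((if b then 1 else 0) + no xi')%nat end.

Definition Inv (e : R) (L : Law) (z o : nat) : Prop :=
  nonnegL L /\ boundedL L /\ mass1 L /\
  ((o = 0%nat /\ isbit L (e ^ (2 ^ z))) \/
   ((1 <= o)%nat /\ SG L (e ^ (2 ^ z)) (/ 2 ^ o * (1 + e ^ 2) ^ z))).

Lemma pow_01 e n : 0 <= e <= 1 -> 0 <= e ^ n <= 1.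
Proof. intros H; split; [apply pow_le; lra|]. induction n; simpl; nra. Qed.

Lemma pow_dec e m n : 0 <= e <= 1 -> (m <= n)%nat -> e ^ n <= e ^ m.
Proof.
  intros H Hmn. replace n with (m + (n - m))%nat by lia. rewrite pow_add.
  pose proof (pow_01 e m H); pose proof (pow_01 e (n - m) H). nra.
Qed.

Lemma pow2S e z : e ^ (2 ^ S z) = e ^ (2 ^ z) * e ^ (2 ^ z).
Proof. rewrite <- pow_add. f_equal. simpl. lia. Qed.

Lemma one_le_pow x n : 1 <= x -> 1 <= x ^ n.
Proof. intros H; induction n; simpl; nra. Qed.

Lemma inv_step e L z o b : 0 <= e <= 1 -> Inv e L z o ->
  Inv e (step b L) (if b then z else S z) (if b then S o else o).
Proof.
  intros He [Hn [Hb [Hm HI]]].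
  split; [apply step_nonneg; auto|]. split; [apply step_bounded; auto|].
  split; [apply step_mass; auto|].
  pose proof (pow_01 e (2 ^ z) He) as Hmu.
  assert (HX : 1 <= (1 + e ^ 2) ^ z) by (apply one_le_pow; pose proof (pow_01 e 2 He); lra).
  assert (Hmu2 : e ^ (2 ^ z) * e ^ (2 ^ z) <= e ^ 2).
  { rewrite <- pow2S. apply pow_dec; auto. simpl. pose proof (Nat.pow_nonzero 2 z). lia. }
  destruct b; destruct HI as [[Ho Hbit]|[Ho Hsg]].
  - right. split; [lia|]. subst o.
    apply SG_mono with (1 / 2).
    + simpl. replace (/ (2 * 1)) with (1 / 2) by field. simpl in HX. lra.
    + replace (1 / 2) with (1 / 2) by ring. apply SG_avg; auto. apply isbit_SG; auto. lra.
  - right. split; [lia|].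
    apply SG_mono with ((/ 2 ^ o * (1 + e ^ 2) ^ z) / 2).
    + simpl. rewrite Rinv_mult. lra.
    + apply SG_avg; auto.
  - left. split; auto. rewrite pow2S. apply isbit_step0; auto.
  - right. split; auto. rewrite pow2S.
    apply SG_mono with ((/ 2 ^ o * (1 + e ^ 2) ^ z) * (1 + e ^ (2 ^ z) * e ^ (2 ^ z))).
    + change ((1 + e ^ 2) ^ S z) with ((1 + e ^ 2) * (1 + e ^ 2) ^ z).
      assert (0 < / 2 ^ o) by (apply Rinv_0_lt_compat, pow_lt; lra).
      assert (0 <= / 2 ^ o * (1 + e ^ 2) ^ z) by nra.
      replace (/ 2 ^ o * ((1 + e ^ 2) * (1 + e ^ 2) ^ z)) with (/ 2 ^ o * (1 + e ^ 2) ^ z * (1 + e ^ 2)) by ring.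
      apply Rmult_le_compat_l; lra.
    + apply SG_prod; auto. assert (0 < / 2 ^ o) by (apply Rinv_0_lt_compat, pow_lt; lra). nra.
Qed.

Lemma inv_lawf e xi : 0 <= e <= 1 -> forall L z o, Inv e L z o ->
  Inv e (lawf xi L) (z + nz xi) (o + no xi).
Proof.
  intros He; induction xi as [|b xi IH]; intros L z o H; simpl.
  - rewrite !Nat.add_0_r; auto.
  - unfold lawf in *. simpl.
    replace (z + ((if b then 0 else 1) + nz xi))%nat with ((if b then z else S z) + nz xi)%nat by (destruct b; lia).
    replace (o + ((if b then 1 else 0) + no xi))%nat with ((if b then S o else o) + no xi)%nat by (destruct b; lia).
    apply IH. apply inv_step; auto.
Qed.

Lemma chernoff L mu s2 : SG L mu s2 -> 0 < s2 ->
  EL L (fun x => exp (- (mu / s2) * x)) <= exp (- (mu ^ 2 / (2 * s2))).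
Proof.
  intros H Hs. eapply Rle_trans; [apply H|]. apply exp_le. right. field. lra.
Qed.

Lemma inv_SG e L z o : 0 <= e <= 1 -> Inv e L z o ->
  SG L (e ^ (2 ^ z)) (if Nat.eqb o 0 then 1 else / 2 ^ o * (1 + e ^ 2) ^ z).
Proof.
  intros He [_ [_ [_ [[Ho Hb]|[Ho Hs]]]]].
  - subst. simpl. apply isbit_SG; auto. pose proof (pow_01 e (2 ^ z) He); lra.
  - destruct o; [lia|]. simpl. auto.
Qed.

Lemma exp_pow_n y n : exp y ^ n = exp (INR n * y).
Proof.
  induction n as [|n IH]; simpl pow.
  - simpl. rewrite Rmult_0_l, exp_0. reflexivity.
  - rewrite IH, <- exp_plus, S_INR. f_equal. ring.
Qed.

Lemma two_pow_exp m : 2 ^ m = exp (INR m * ln 2).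
Proof. rewrite <- Rpower_pow by lra. reflexivity. Qed.

Lemma ln2_pos : 0 < ln 2.
Proof. pose proof ln_lt_2; lra. Qed.

Lemma growth_lb p m : (INR m * ln 2 / INR (S p)) ^ (S p) <= 2 ^ m.
Proof.
  rewrite two_pow_exp.
  set (x := INR m * ln 2).
  assert (Hx : 0 <= x) by (unfold x; pose proof (pos_INR m); pose proof ln2_pos; nra).
  assert (HS : 0 < INR (S p)) by (apply lt_0_INR; lia).
  replace (exp x) with (exp (x / INR (S p)) ^ (S p)).
  2: { rewrite exp_pow_n. f_equal. field. lra. }
  apply pow_incr. split.
  - unfold Rdiv; apply Rmult_le_pos; [lra| left; apply Rinv_0_lt_compat; lra].
  - pose proof (exp_ineq1_le (x / INR (S p))). lra.
Qed.

Lemma growth p C : exists N, forall m, (N <= m)%nat -> C * INR m ^ p <= 2 ^ m.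
Proof.
  set (a := (ln 2 / INR (S p)) ^ (S p)).
  assert (HS : 0 < INR (S p)) by (apply lt_0_INR; lia).
  assert (Ha : 0 < a) by (apply pow_lt; apply Rdiv_lt_0_compat; [apply ln2_pos| lra]).
  destruct (INR_unbounded (Rabs C / a)) as [N HN].
  exists N. intros m Hm.
  assert (HmN : INR N <= INR m) by (apply le_INR; auto).
  eapply Rle_trans; [|apply (growth_lb p m)].
  replace ((INR m * ln 2 / INR (S p)) ^ S p) with (INR m * INR m ^ p * a).
  2: { unfold a. unfold Rdiv. rewrite !Rpow_mult_distr. simpl pow. ring. }
  assert (0 <= INR m ^ p) by (apply pow_le, pos_INR).
  assert (Rabs C / a * a = Rabs C) by (field; lra).
  assert (C <= Rabs C) by apply Rle_abs.
  assert (Rabs C <= INR m * a).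
  { assert (Rabs C / a <= INR m) by lra.
    apply Rmult_le_compat_r with (r := a) in H2; lra. }
  nra.
Qed.

Lemma pow_lt_S K x q : 0 <= K < x -> K ^ S q < x ^ S q.
Proof.
  intros H; induction q as [|q IH]; [simpl; lra|].
  change (K ^ S (S q)) with (K * K ^ S q). change (x ^ S (S q)) with (x * x ^ S q).
  assert (0 <= K ^ S q) by (apply pow_le; lra).
  apply Rle_lt_trans with (K * x ^ S q); [apply Rmult_le_compat_l; lra|].
  apply Rmult_lt_compat_r; [lra| lra].
Qed.

Lemma pow_le_inv x K q : 0 <= x -> 0 <= K -> (1 <= q)%nat -> x ^ q <= K ^ q -> x <= K.
Proof.
  intros Hx HK Hq H. destruct (Rle_lt_dec x K) as [|Hlt]; auto.
  exfalso. assert (K ^ q < x ^ q).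
  { destruct q as [|q]; [lia|]. apply pow_lt_S; lra. }
  lra.
Qed.

Lemma len_nz_no xi : length xi = (nz xi + no xi)%nat.
Proof. induction xi as [|b xi IH]; simpl; [auto| destruct b; simpl; lia]. Qed.

Lemma path_facts xi : forall m r, endpath m r xi -> (1 <= r <= m)%nat -> (2 <= m)%nat ->
  final_node m r xi = ((m - length xi)%nat, (r - nz xi)%nat) /\ (length xi + 2 <= m)%nat /\
  (nz xi + 1 <= r)%nat /\ (r - nz xi <= m - length xi)%nat.
Proof.
  induction xi as [|b xi IH]; intros m r H Hr Hm; simpl in *.
  - rewrite !Nat.sub_0_r. repeat split; lia.
  - destruct H as [Hrm H].
    destruct (IH (m - 1)%nat (if b then r else (r - 1)%nat) H) as [E [H1 [H2 H3]]];
      [destruct b; lia| lia|].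
    rewrite E. destruct b; simpl in *; repeat split; try (f_equal; lia); lia.
Qed.

Lemma p_biorth_eq e m xi : (length xi <= m)%nat ->
  p_biorth e m xi = prodE (lawf xi (bitlaw e)) (2 ^ (m - length xi))
                      (fun v => indic (md_error (m - length xi) v)).
Proof.
  intros H. unfold p_biorth.
  rewrite (Ex_base e (2 ^ m) (fun v => indic (md_error (m - length xi) (yxi xi v)))).
  replace (2 ^ m)%nat with (2 ^ length xi * 2 ^ (m - length xi))%nat.
  - apply (prodE_yxi xi (bitlaw e) _ (fun v => indic (md_error (m - length xi) v))).
  - rewrite <- Nat.pow_add_r. f_equal. lia.
Qed.

Lemma p_full_eq e m xi s : (length xi <= m)%nat ->
  p_full e m xi s = prodE (lawf xi (bitlaw e)) (2 ^ (m - length xi))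
     (fun v => let x := nth s v 0 in indic (Rltb x 0) + / 2 * indic (Reqb x 0)).
Proof.
  intros H. unfold p_full. cbv zeta.
  rewrite (Ex_base e (2 ^ m) (fun v => indic (Rltb (nth s (yxi xi v) 0) 0) + / 2 * indic (Reqb (nth s (yxi xi v) 0) 0))).
  replace (2 ^ m)%nat with (2 ^ length xi * 2 ^ (m - length xi))%nat.
  - apply (prodE_yxi xi (bitlaw e) _ (fun v => indic (Rltb (nth s v 0) 0) + / 2 * indic (Reqb (nth s v 0) 0))).
  - rewrite <- Nat.pow_add_r. f_equal. lia.
Qed.

Lemma one_plus_pow x n : 0 <= x <= 1 -> (1 + x) ^ n <= 1 + x * (2 ^ n - 1).
Proof.
  intros H; induction n as [|n IH]; simpl; [lra|].
  assert (1 <= 2 ^ n) by (apply pow_R1_Rle; lra).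
  assert (0 <= (1 + x) ^ n) by (apply pow_le; lra).
  assert ((1 + x) * (1 + x) ^ n <= (1 + x) * (1 + x * (2 ^ n - 1))) by (apply Rmult_le_compat_l; lra).
  assert (x * x * (2 ^ n - 1) <= x * (2 ^ n - 1)) by (apply Rmult_le_compat_r; nra).
  nra.
Qed.

Lemma pow_INR2 n : INR (2 ^ n) = 2 ^ n.
Proof. rewrite pow_INR. simpl. f_equal; ring. Qed.

Lemma pow_split m r : (r <= m)%nat -> 2 ^ m = 2 ^ (m - r) * 2 ^ r.
Proof. intros H. rewrite <- pow_add. f_equal. lia. Qed.

Lemma pow2_mono a b : (a <= b)%nat -> 2 ^ a <= 2 ^ b.
Proof. intros H. apply Rle_pow; [lra| auto]. Qed.

Theorem theorem4 (r : nat) (c : R) :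
  (2 <= r)%nat -> ln 4 < c ->
  exists M : nat, forall m : nat, (M <= m)%nat ->
    forall xi : list bool, endpath m r xi ->
      (snd (final_node m r xi) = 1%nat ->
         p_biorth (eps_tilde c r m) m xi < err_bound c r m) /\
      (snd (final_node m r xi) = fst (final_node m r xi) ->
         forall sigma : nat, (sigma < 2 ^ (m - length xi))%nat ->
           p_full (eps_tilde c r m) m xi sigma < err_bound c r m).
Proof.
  intros Hr Hc.
  assert (Hln4 : ln 4 = 2 * ln 2) by (replace 4 with (2 * 2) by ring; rewrite ln_mult; lra).
  pose proof ln2_pos as Hln2.
  assert (Hcpos : 0 < c) by lra.
  set (c' := c / 2 - ln 2). assert (Hc' : 0 < c') by (unfold c'; lra).
  set (q := (2 ^ (r - 1))%nat).
  assert (Hq : (1 <= q)%nat) by (unfold q; pose proof (Nat.pow_nonzero 2 (r - 1)); lia).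
  assert (Hq2 : (2 * q = 2 ^ r)%nat).
  { unfold q. replace r with (S (r - 1)) at 2 by lia. simpl. lia. }
  assert (HqR : INR q = 2 ^ (r - 1)) by apply pow_INR2.
  assert (H2r1 : 0 < 2 ^ (r - 1)) by (apply pow_lt; lra).
  assert (H2r : 0 < 2 ^ r) by (apply pow_lt; lra).
  set (K := 2 * ln 2 / (c * 2 ^ (r - 1))).
  assert (HK : 0 < K) by (unfold K; apply Rdiv_lt_0_compat; [lra| apply Rmult_lt_0_compat; lra]).
  assert (HKq : 0 < K ^ q) by (apply pow_lt; lra).
  destruct (growth 1 (c * 2 ^ r)) as [N1 HN1].
  destruct (growth (S q) (c * 2 ^ r / K ^ q)) as [N2 HN2].
  destruct (growth 1 ((c' ^ 2 * 2 ^ (3 * r + 2) + 1) / c)) as [N3 HN3].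
  exists (N1 + N2 + N3 + r + 2)%nat.
  intros m Hm xi Hpath.
  specialize (HN1 m ltac:(lia)). specialize (HN2 m ltac:(lia)). specialize (HN3 m ltac:(lia)).
  assert (Hm1 : 1 <= INR m) by (replace 1 with (INR 1) by reflexivity; apply le_INR; lia).
  assert (H2m : 0 < 2 ^ m) by (apply pow_lt; lra).
  set (d := c * INR m * 2 ^ r / 2 ^ m).
  assert (Hd0 : 0 < d) by (unfold d; apply Rdiv_lt_0_compat; [repeat apply Rmult_lt_0_compat|]; lra).
  assert (Hd1 : d <= 1).
  { unfold d. simpl pow in HN1. apply Rmult_le_reg_r with (2 ^ m); auto.
    unfold Rdiv. rewrite Rmult_assoc, Rinv_l by lra. lra. }
  set (e := eps_tilde c r m).
  assert (Hepow : forall n, e ^ n = Rpower d (/ 2 ^ r * INR n)).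
  { intros n. unfold e, eps_tilde. fold d. rewrite <- Rpower_pow by (apply exp_pos).
    rewrite Rpower_mult. reflexivity. }
  assert (He01 : 0 < e <= 1).
  { unfold e, eps_tilde; fold d. unfold Rpower. split; [apply exp_pos|].
    rewrite <- exp_0. apply exp_le.
    assert (ln d <= 0) by (rewrite <- ln_1; destruct Hd1 as [Hd1|Hd1]; [left; apply ln_increasing; lra| rewrite Hd1; lra]).
    assert (0 < / 2 ^ r) by (apply Rinv_0_lt_compat; lra). nra. }
  assert (Hed : e ^ (2 ^ r) = d).
  { rewrite Hepow, pow_INR2. rewrite Rinv_l by lra. apply Rpower_1; auto. }
  assert (Hw : e ^ (2 ^ (r - 1)) * e ^ (2 ^ (r - 1)) = d).
  { rewrite <- pow2S. replace (S (r - 1)) with r by lia. auto. }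
  destruct (path_facts xi m r Hpath) as [Hfin [Hlen [Hnz Hrr]]]; [lia|lia|].
  rewrite Hfin. cbn [fst snd].
  pose proof (len_nz_no xi) as Hl.
  set (L := lawf xi (bitlaw e)).
  assert (HI : Inv e L (nz xi) (no xi)).
  { unfold L. replace (nz xi) with (0 + nz xi)%nat by lia. replace (no xi) with (0 + no xi)%nat by lia.
    apply inv_lawf; [lra|]. destruct (bitlaw_props e) as [B1 [B2 [B3 B4]]]; [lra|].
    repeat split; auto. left. split; auto. simpl. rewrite Rmult_1_r. auto. }
  pose proof HI as [HLn [HLb [HLm _]]].
  pose proof (inv_SG e L (nz xi) (no xi) ltac:(lra) HI) as HSG.
  set (mu := e ^ (2 ^ nz xi)) in *.
  set (s2 := if Nat.eqb (no xi) 0 then 1 else / 2 ^ no xi * (1 + e ^ 2) ^ nz xi) in *.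
  assert (HPi : 1 <= (1 + e ^ 2) ^ nz xi) by (apply pow_R1_Rle; pose proof (pow_le e 2); lra).
  assert (Hs2 : 0 < s2).
  { unfold s2. destruct (Nat.eqb (no xi) 0); [lra|].
    assert (0 < / 2 ^ no xi) by (apply Rinv_0_lt_compat, pow_lt; lra). nra. }
  assert (Hmu : 0 <= mu) by (unfold mu; apply pow_le; lra).
  pose proof (chernoff L mu s2 HSG Hs2) as Hch.
  assert (HM0 : 0 <= EL L (fun x => exp (- (mu / s2) * x))).
  { apply EL_nonneg; auto. intros; left; apply exp_pos. }
  assert (HM1 : EL L (fun x => exp (- (mu / s2) * x)) <= 1).
  { eapply Rle_trans; [apply Hch|]. rewrite <- exp_0. apply exp_le.
    assert (0 <= mu ^ 2 / (2 * s2)) by (unfold Rdiv; apply Rmult_le_pos; [apply pow2_ge_0| left; apply Rinv_0_lt_compat; lra]). lra. }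
  assert (Herr : exp (- c' * INR m) <= err_bound c r m) by (unfold err_bound; apply Rmax_l).
  assert (Hexpc : exp (- c' * INR m) = 2 ^ m * exp (- (c * INR m / 2))).
  { rewrite two_pow_exp, <- exp_plus. f_equal. unfold c'. field. }
  split.
  - intros Hr1.
    assert (Hnz1 : nz xi = (r - 1)%nat) by lia.
    assert (Hmu2 : mu ^ 2 = d) by (unfold mu; rewrite Hnz1, <- Hw; ring).
    rewrite p_biorth_eq by lia.
    set (k' := (m - length xi - 1)%nat).
    replace (m - length xi)%nat with (S k') by (unfold k'; lia).
    replace (mu / s2) with (2 * (mu / s2 / 2)) in HM0, HM1, Hch by (field; lra).
    eapply Rle_lt_trans.
    { apply (biorth_bound L (mu / s2 / 2) k'); auto.
      unfold Rdiv; apply Rmult_le_pos; [apply Rmult_le_pos|]; try lra.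
      left; apply Rinv_0_lt_compat; lra. }
    eapply Rle_lt_trans.
    { apply Rmult_le_compat_l.
      - assert (1 <= 2 ^ S k') by (apply pow_R1_Rle; lra). lra.
      - apply pow_incr. split; [apply HM0| apply Hch]. }
    rewrite exp_pow_n, pow_INR2, Hmu2.
    apply Rlt_le_trans with (exp (- c' * INR m)); [|exact Herr].
    rewrite Hexpc.
    assert (HPQ : 2 ^ m = 2 ^ (m - r) * 2 ^ r) by (apply pow_split; lia).
    assert (Hdm : d * 2 ^ (m - r) = c * INR m).
    { unfold d. rewrite HPQ. field. split; apply Rgt_not_eq, pow_lt; lra. }
    unfold s2 in *. destruct (Nat.eqb (no xi) 0) eqn:Eno.
    + apply Nat.eqb_eq in Eno.
      assert (Hk' : k' = (m - r)%nat) by (unfold k'; lia).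
      rewrite Hk'.
      replace (2 ^ (m - r) * - (d / (2 * 1))) with (- (c * INR m / 2)) by (rewrite <- Hdm; field).
      assert (2 * 2 ^ S (m - r) <= 2 ^ m).
      { change (2 * 2 ^ S (m - r)) with (2 ^ S (S (m - r))). apply pow2_mono. lia. }
      pose proof (exp_pos (- (c * INR m / 2))). nra.
    + apply Nat.eqb_neq in Eno. rewrite Hnz1 in *.
      set (P := (1 + e ^ 2) ^ (r - 1)) in *.
      assert (Hk' : (k' + no xi = m - r)%nat) by (unfold k'; lia).
      assert (H2no : 0 < 2 ^ no xi) by (apply pow_lt; lra).
      assert (H2k : 0 < 2 ^ k') by (apply pow_lt; lra).
      assert (Hkn : 2 ^ k' * 2 ^ no xi = 2 ^ (m - r)) by (rewrite <- pow_add, Hk'; auto).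
      replace (2 ^ k' * - (d / (2 * (/ 2 ^ no xi * P)))) with (- (c * INR m / (2 * P))).
      2: { rewrite <- Hdm, <- Hkn. field. lra. }
      assert (Hcnt : 2 * 2 ^ S k' * 2 <= 2 ^ m).
      { replace (2 * 2 ^ S k' * 2) with (2 ^ S (S (S k'))) by (simpl; ring). apply pow2_mono. lia. }
      assert (HC1 : c * INR m * e ^ 2 * 2 ^ (r - 1) <= 2 * ln 2).
      { set (x := INR m * e ^ 2).
        assert (Hx : 0 <= x) by (unfold x; pose proof (pow2_ge_0 e); nra).
        assert (Hxq : x ^ q = INR m ^ q * d).
        { unfold x. rewrite Rpow_mult_distr, <- pow_mult, Hq2, Hed. reflexivity. }
        assert (HxK : x ^ q <= K ^ q).
        { rewrite Hxq. unfold d.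
          simpl pow in HN2.
          assert (HmqS : 0 <= INR m ^ q) by (apply pow_le; lra).
          apply Rmult_le_reg_r with (2 ^ m / K ^ q).
          - apply Rdiv_lt_0_compat; lra.
          - replace (INR m ^ q * (c * INR m * 2 ^ r / 2 ^ m) * (2 ^ m / K ^ q))
              with (c * 2 ^ r / K ^ q * (INR m * INR m ^ q)) by (field; lra).
            replace (K ^ q * (2 ^ m / K ^ q)) with (2 ^ m) by (field; lra). lra. }
        pose proof (pow_le_inv x K q Hx ltac:(lra) Hq HxK) as HxK'.
        unfold x, K in HxK'.
        apply Rmult_le_compat_r with (r := c * 2 ^ (r - 1)) in HxK'; [|nra].
        replace (2 * ln 2 / (c * 2 ^ (r - 1)) * (c * 2 ^ (r - 1))) with (2 * ln 2) in HxK' by (field; lra).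
        nra. }
      assert (HP1 : 1 <= P) by (unfold P; apply pow_R1_Rle; pose proof (pow2_ge_0 e); lra).
      assert (HPu : P <= 1 + e ^ 2 * (2 ^ (r - 1) - 1)).
      { unfold P. apply one_plus_pow. pose proof (pow_01 e 2 ltac:(lra)); lra. }
      assert (Hkey : c * INR m / 2 - c * INR m / (2 * P) <= ln 2).
      { assert (Hcm : 0 < c * INR m) by nra.
        assert (E1 : c * INR m / (2 * P) * (2 * P) = c * INR m) by (field; lra).
        assert (0 <= e ^ 2) by apply pow2_ge_0.
        nra. }
      assert (Hexp : exp (- (c * INR m / (2 * P))) <= 2 * exp (- (c * INR m / 2))).
      { apply Rle_trans with (exp (ln 2 + - (c * INR m / 2))); [apply exp_le; lra|].
        rewrite exp_plus, exp_ln by lra. lra. }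
      pose proof (exp_pos (- (c * INR m / (2 * P)))).
      pose proof (exp_pos (- (c * INR m / 2))).
      nra.
  - intros Heq s Hs.
    assert (Hno : no xi = (m - r)%nat) by lia.
    assert (Hnz2 : (nz xi + 2 <= r)%nat) by lia.
    rewrite p_full_eq by lia.
    assert (Ht : 0 <= mu / s2) by (unfold Rdiv; apply Rmult_le_pos; [lra| left; apply Rinv_0_lt_compat; lra]).
    eapply Rle_lt_trans; [apply (full_bound L _ s (mu / s2)); auto|].
    replace (- (mu / s2)) with (- (mu / s2)) by reflexivity.
    eapply Rle_lt_trans; [apply Hch|].
    apply Rlt_le_trans with (exp (- c' * INR m)); [|exact Herr].
    assert (HPQ : 2 ^ m = 2 ^ (m - r) * 2 ^ r) by (apply pow_split; lia).
    assert (H2mr : 0 < 2 ^ (m - r)) by (apply pow_lt; lra).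
    assert (Hdm : d * 2 ^ (m - r) = c * INR m).
    { unfold d. rewrite HPQ. field. split; apply Rgt_not_eq, pow_lt; lra. }
    set (w := e ^ (2 ^ (r - 1))) in *.
    assert (Hw0 : 0 <= w) by (unfold w; apply pow_le; lra).
    assert (Hmuw : w <= mu ^ 2).
    { replace (mu ^ 2) with (e ^ (2 ^ S (nz xi))) by (unfold mu; rewrite pow2S; ring).
      unfold w. apply pow_dec; [lra|]. apply Nat.pow_le_mono_r; lia. }
    assert (Hs2b : s2 <= / 2 ^ (m - r) * 2 ^ r).
    { unfold s2. destruct (Nat.eqb (no xi) 0) eqn:E; [apply Nat.eqb_eq in E; lia|].
      rewrite Hno. apply Rmult_le_compat_l; [left; apply Rinv_0_lt_compat; lra|].
      apply Rle_trans with (2 ^ nz xi).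
      - apply pow_incr. pose proof (pow_01 e 2 ltac:(lra)). lra.
      - apply pow2_mono. lia. }
    set (X := w * 2 ^ (m - r) / (2 * 2 ^ r)).
    assert (HX : X <= mu ^ 2 / (2 * s2)).
    { unfold X. apply Rle_trans with (w / (2 * s2)).
      - apply Rle_trans with (w / (2 * (/ 2 ^ (m - r) * 2 ^ r))).
        + right. field. lra.
        + unfold Rdiv. apply Rmult_le_compat_l; auto. apply Rinv_le_contravar; lra.
      - unfold Rdiv. apply Rmult_le_compat_r; [left; apply Rinv_0_lt_compat; lra| auto]. }
    assert (HX2 : c' * INR m < X).
    { assert (HX0 : 0 <= X) by (unfold X; apply Rmult_le_pos; [nra| left; apply Rinv_0_lt_compat; lra]).
      assert (HXsq : X * X = c * INR m * 2 ^ (m - r) / (4 * (2 ^ r * 2 ^ r))).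
      { unfold X. replace (w * 2 ^ (m - r) / (2 * 2 ^ r) * (w * 2 ^ (m - r) / (2 * 2 ^ r)))
          with ((w * w) * 2 ^ (m - r) * 2 ^ (m - r) / (4 * (2 ^ r * 2 ^ r))) by (field; lra).
        rewrite Hw, <- Hdm. field. lra. }
      rewrite pow_1 in HN3.
      assert (H3r : 2 ^ (3 * r + 2) = 4 * (2 ^ r * 2 ^ r * 2 ^ r)).
      { replace (3 * r + 2)%nat with (r + r + r + 2)%nat by lia.
        rewrite !pow_add. simpl. ring. }
      rewrite H3r, HPQ in HN3.
      assert (Hbig : c' * INR m * (c' * INR m) < X * X).
      { rewrite HXsq. set (Q := 2 ^ r) in *. set (Pm := 2 ^ (m - r)) in *.
        assert (HQ : 0 < Q) by lra.
        assert (E1 : (c' ^ 2 * (4 * (Q * Q * Q)) + 1) / c * INR m * c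
                     = (c' ^ 2 * (4 * (Q * Q * Q)) + 1) * INR m) by (field; lra).
        assert (Hc1 : (c' ^ 2 * (4 * (Q * Q * Q)) + 1) * INR m <= c * (Pm * Q)).
        { rewrite <- E1. rewrite (Rmult_comm c (Pm * Q)). apply Rmult_le_compat_r; lra. }
        apply Rmult_lt_reg_r with (4 * (Q * Q) * Q).
        { repeat apply Rmult_lt_0_compat; lra. }
        replace (c * INR m * Pm / (4 * (Q * Q)) * (4 * (Q * Q) * Q)) with (INR m * (c * (Pm * Q))) by (field; lra).
        apply Rlt_le_trans with (INR m * ((c' ^ 2 * (4 * (Q * Q * Q)) + 1) * INR m)).
        - simpl pow. nra.
        - apply Rmult_le_compat_l; lra. }
      assert (0 <= c' * INR m) by nra.
      destruct (Rle_lt_dec X (c' * INR m)) as [Hle|]; auto.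
      exfalso. assert (X * X <= c' * INR m * (c' * INR m)) by (apply Rmult_le_compat; lra). lra. }
    apply Rle_lt_trans with (exp (- X)).
    + apply exp_le. lra.
    + apply exp_increasing. lra.
Qed.
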